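(* For every integer $L\geq 0$, \[ \sum_{j=-\infty}^{\infty} (-1)^j \left(\frac{j}{3}\right) {2L+1 \brack L-j}_{q^2} q^{j^2} = q^{1+2L}\,\frac{(q^3;q^6)_L}{(q;q^2)_L}. \]
   Context: For a variable $a$ and integer $n\ge 0$, $(a;q)_n=(1-a)(1-aq)\cdots(1-aq^{n-1})$ (with $(a;q)_0=1$). The $q$-binomial coefficient is ${A \brack B}_q=\frac{(q;q)_A}{(q;q)_B(q;q)_{A-B}}$ if $0\le B\le A$ are integers, and $0$ otherwise; ${A\brack B}_{q^2}$ is the same with $q$ replaced by $q^2$. $\left(\frac{j}{3}\right)$ is the Legendre symbol modulo 3: it equals $1$ if $j\equiv 1 \pmod 3$, $-1$ if $j\equiv -1\pmod 3$, and $0$ if $3\mid j$. *)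

(* Defs.v *)
From HB Require Import structures.
From mathcomp Require Import all_boot all_order all_algebra.
Set Implicit Arguments. Unset Strict Implicit. Unset Printing Implicit Defensive.
Import Order.TTheory GRing.Theory Num.Theory.
Local Open Scope ring_scope.

Definition qpoch (R : comPzRingType) (a q : R) (n : nat) : R :=
  \prod_(i < n) (1 - a * q ^+ i).

Definition qbinom (F : fieldType) (q : F) (A B : int) : F :=
  if (0 <= B) && (B <= A) then
    qpoch q q `|A|%N / (qpoch q q `|B|%N * qpoch q q `|A - B|%N)
  else 0.

Definition leg3 (j : int) : int :=
  if (j %% 3)%Z == 1 then 1 else if (j %% 3)%Z == 2 then -1 else 0.

Definition QF := {fraction {poly int}}.
Definition qX : QF := tofrac ('X : {poly int}).

(* Main.v *)
Require Import Defs.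
From HB Require Import structures.
From mathcomp Require Import all_boot all_order all_algebra.
From mathcomp Require Import zify ring.
Import Order.TTheory GRing.Theory Num.Theory.
Local Open Scope ring_scope.
Set Implicit Arguments. Unset Strict Implicit. Unset Printing Implicit Defensive.



Fixpoint gb {R : pzRingType} (Q : R) (n m : nat) : R :=
  match n, m with
  | 0%N, 0%N => 1
  | 0%N, _.+1 => 0
  | _.+1, 0%N => 1
  | n'.+1, m'.+1 => gb Q n' m'.+1 + Q ^+ (n' - m') * gb Q n' m'
  end.

Lemma gb_big (R : pzRingType) (Q : R) n m : (n < m)%N -> gb Q n m = 0.
Proof.
elim: n m => [|n IH] [|m] //= H.
by rewrite !IH ?mulr0 ?addr0 // ltnW.
Qed.

Lemma gb_diag (R : pzRingType) (Q : R) n : gb Q n n = 1.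
Proof. by elim: n => [|n IH] //=; rewrite gb_big // subnn expr0 mul1r add0r. Qed.

Lemma qpochS (R : comPzRingType) (Q : R) k :
  qpoch Q Q k.+1 = qpoch Q Q k * (1 - Q ^+ k.+1).
Proof. by rewrite /qpoch big_ord_recr /= exprS. Qed.

Lemma qpoch0 (R : comPzRingType) (Q : R) : qpoch Q Q 0 = 1.
Proof. by rewrite /qpoch big_ord0. Qed.

Lemma qpoch_neq0 (F : fieldType) (Q : F) (HQ : forall k, (0 < k)%N -> Q ^+ k != 1) k :
  qpoch Q Q k != 0.
Proof.
elim: k => [|k IH]; first by rewrite /qpoch big_ord0 oner_neq0.
rewrite qpochS mulf_neq0 // subr_eq0 eq_sym; exact: HQ.
Qed.

Lemma qbinomE (F : fieldType) (Q : F) (n m : nat) :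
  qbinom Q n%:Z m%:Z = if (m <= n)%N then qpoch Q Q n / (qpoch Q Q m * qpoch Q Q (n - m)) else 0.
Proof.
rewrite /qbinom lez_nat /=; case: ifP => // H.
rewrite subzn //.
Qed.

Lemma qbinom_gb (F : fieldType) (Q : F) (HQ : forall k, (0 < k)%N -> Q ^+ k != 1) n m :
  qbinom Q n%:Z m%:Z = gb Q n m.
Proof.
have nz := qpoch_neq0 HQ.
elim: n m => [|n IH] [|m].
- rewrite qbinomE /= /qpoch !big_ord0 !mul1r.
  by rewrite invr1.
- by rewrite (qbinomE Q 0 m.+1).
- rewrite qbinomE /= subn0. rewrite qpoch0 mul1r divff //.
rewrite /= -!IH !qbinomE.
case: (ltngtP m n) => Hmn.
- have -> : n = (m + (n - m - 1)).+1 by lia.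
  set r := (n - m - 1)%N.
  have -> : ((m + r).+1 - m.+1 = r)%N by lia.
  have -> : ((m + r).+1.+1 - m.+1 = r.+1)%N by lia.
  have -> : ((m + r).+1 - m = r.+1)%N by lia.
  rewrite ifT; last lia.
  rewrite !qpochS.
  have h1 := nz m; have h2 := nz r; have h3 := nz (m+r)%N.
  have h4 : 1 - Q ^+ m.+1 != 0 by rewrite subr_eq0 eq_sym HQ.
  have h5 : 1 - Q ^+ r.+1 != 0 by rewrite subr_eq0 eq_sym HQ.
  have -> : Q ^+ (m + r).+2 = Q ^+ m.+1 * Q ^+ r.+1 by rewrite -exprD; congr (_ ^+ _); lia.
  by field; rewrite h1 h2 h4 h5.
- by rewrite ifF ?mulr0 ?addr0 //; lia.
- subst m. rewrite ltnSn !subnn qpoch0 expr0 mul1r add0r !mulr1.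
  by rewrite !divff // nz.
Qed.



Lemma c_rel (R : comNzRingType) (Q : R) (c : nat -> R) (hc : forall t, c t.+1 = Q * c t) m n :
  (m <= n)%N -> c n = Q ^+ (n - m) * c m.
Proof.
move=> H; have -> : n = (m + (n - m))%N by lia.
rewrite addKn; elim: (n - m)%N => [|k IH]; first by rewrite addn0 expr0 mul1r.
by rewrite addnS hc IH exprS mulrA.
Qed.

Definition W (R : comNzRingType) (c : nat -> R) m := \prod_(t < m) c t.

Lemma prod_coef (R : comNzRingType) (Q : R) (c : nat -> R) (hc : forall t, c t.+1 = Q * c t) n i :
  (\prod_(t < n) ('X + (c t)%:P))`_i =
  if (i <= n)%N then gb Q n (n - i) * W c (n - i) else 0.
Proof.
elim: n i => [|n IH] i.
  rewrite big_ord0 coef1 /W; case: i => [|i] //=; by rewrite big_ord0 mulr1.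
rewrite big_ord_recr /= mulrDr coefD coefMX coefMC.
case: i => [|i].
  rewrite !IH !subn0 /= gb_diag gb_big // subnn expr0 add0r mul1r /W big_ord_recr /=.
  by rewrite add0r !mul1r.
rewrite !IH ltnS subSS /=.
case: (ltngtP i n) => H.
- 
  have -> : (n - i = (n - i.+1).+1)%N by lia.
  rewrite /=.
  set m := (n - i.+1)%N.
  rewrite mulrDl; congr (_ + _).
  rewrite /W big_ord_recr /= (c_rel hc (m := m) (n := n)); [ring|lia].
- by rewrite mul0r addr0.
- subst i. rewrite subnn /= mul0r addr0; by case: (n).
Qed.



Definition pp (F : fieldType) : {poly F} := 'X^2 - 'X + 1.
Definition phi (F : fieldType) (P : {poly F}) : F := (P %% pp F)`_1.

Lemma phiD (F : fieldType) (P1 P2 : {poly F}) : phi (P1 + P2) = phi P1 + phi P2.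
Proof. by rewrite /phi modpD coefD. Qed.

Lemma phiZ (F : fieldType) (a : F) (P : {poly F}) : phi (a *: P) = a * phi P.
Proof. by rewrite /phi modpZl coefZ. Qed.

Lemma phi0 (F : fieldType) : phi (0 : {poly F}) = 0.
Proof. by rewrite /phi mod0p coef0. Qed.

Lemma phi_sum (F : fieldType) (I : Type) (r : seq I) (P : pred I) (G : I -> {poly F}) :
  phi (\sum_(i <- r | P i) G i) = \sum_(i <- r | P i) phi (G i).
Proof. exact: (big_morph _ (@phiD F) (@phi0 F)). Qed.

Lemma phi_congr (F : fieldType) (P1 P2 : {poly F}) : pp F %| P1 - P2 -> phi P1 = phi P2.
Proof.
move=> H; have -> : P1 = P2 + (P1 - P2) by rewrite addrC subrK.
by rewrite phiD /phi (modp_eq0 H) coef0 addr0.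
Qed.

Lemma size_pp (F : fieldType) : size (pp F) = 3%N.
Proof.
rewrite /pp -addrA size_polyDl ?size_polyXn //.
apply: (leq_ltn_trans (size_polyD _ _)).
by rewrite size_polyN size_polyX size_poly1.
Qed.

Lemma phi_lin (F : fieldType) (a b : F) : phi (a%:P + b *: 'X) = b.
Proof.
rewrite /phi modp_small; last first.
  rewrite size_pp; apply: (leq_ltn_trans (size_polyD _ _)).
  rewrite gtn_max (leq_ltn_trans (size_polyC_leq1 _)) //=.
  by apply: (leq_ltn_trans (size_scale_leq _ _)); rewrite size_polyX.
by rewrite coefD coefC coefZ coefX mulr1 add0r.
Qed.

Definition psi (F : fieldType) (r : nat) : F :=
  match r with 1%N => 1 | 2%N => 1 | 4%N => -1 | 5%N => -1 | _ => 0 end.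

Lemma dvd_eq (F : fieldType) (P1 P2 D : {poly F}) : P1 - P2 = D * pp F -> pp F %| P1 - P2.
Proof. by move=> ->; rewrite dvdp_mull. Qed.

Lemma phiX_small (F : fieldType) r : (r < 6)%N -> phi ('X^r : {poly F}) = psi F r.
Proof.
case: r => [|[|[|[|[|[|r]]]]]] // _.
- by rewrite expr0 -(addr0 1) -(scale0r (R:=F) 'X) -polyC1 phi_lin.
- by rewrite expr1 -(add0r 'X) -(scale1r 'X) -polyC0 phi_lin.
- rewrite (@phi_congr _ _ ((-1)%:P + 1 *: 'X)) ?phi_lin //.
  apply: (dvd_eq (D := 1)); rewrite /pp polyCN polyC1 scale1r; ring.
- rewrite (@phi_congr _ _ ((-1)%:P + 0 *: 'X)) ?phi_lin //.
  apply: (dvd_eq (D := 'X + 1)); rewrite /pp polyCN polyC1 scale0r; ring.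
- rewrite (@phi_congr _ _ (0%:P + (-1) *: 'X)) ?phi_lin //.
  apply: (dvd_eq (D := 'X^2 + 'X)); rewrite /pp polyC0 scaleN1r; ring.
- rewrite (@phi_congr _ _ (1%:P + (-1) *: 'X)) ?phi_lin //.
  apply: (dvd_eq (D := 'X^3 + 'X^2 - 1)); rewrite /pp polyC1 scaleN1r; ring.
Qed.

Lemma phiX (F : fieldType) e : phi ('X^e : {poly F}) = psi F (e %% 6).
Proof.
rewrite -phiX_small ?ltn_pmod //; apply: phi_congr.
rewrite {1}(divn_eq e 6); elim: (e %/ 6)%N => [|a IH]; first by rewrite mul0n add0n subrr dvdp0.
have -> : ('X^(a.+1 * 6 + e %% 6) - 'X^(e %% 6) : {poly F}) =
  'X^6 * ('X^(a * 6 + e %% 6) - 'X^(e %% 6)) + ('X^4 + 'X^3 - 'X - 1) * 'X^(e %% 6) * pp F.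
  have -> : ('X^(a.+1 * 6 + e %% 6) : {poly F}) = 'X^6 * 'X^(a * 6 + e %% 6).
    by rewrite -exprD; congr (_ ^+ _); lia.
  rewrite /pp; ring.
by rewrite dvdp_add // ?dvdp_mull.
Qed.



Definition cc (F : fieldType) (q : F) (L t : nat) : F := q ^ ((2 * t + 1)%N%:Z - (2 * L)%N%:Z).

Lemma cc_rec (F : fieldType) (q : F) (hq : q != 0) L t : cc q L t.+1 = q ^+ 2 * cc q L t.
Proof. by rewrite /cc exprnP -expfzDr //; congr (_ ^ _); lia. Qed.

Lemma cc_shift (F : fieldType) (q : F) L t : cc q L.+1 t.+1 = cc q L t.
Proof. by rewrite /cc; congr (_ ^ _); lia. Qed.

Lemma cc_first (F : fieldType) (q : F) (hq : q != 0) L : cc q L.+1 0 = (q ^+ (2 * L + 1))^-1.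
Proof.
rewrite /cc exprnP invr_expz; congr (_ ^ _); lia.
Qed.

Lemma cc_last (F : fieldType) (q : F) L : cc q L (2 * L) = q ^+ (2 * L + 1).
Proof. by rewrite /cc exprnP; congr (_ ^ _); lia. Qed.

Definition PL (F : fieldType) (q : F) L : {poly F} := \prod_(t < 2 * L) ('X + (cc q L t)%:P).
Definition dd (F : fieldType) (q : F) t : F := 1 + q ^+ (2 * t + 1) + (q ^+ (2 * t + 1))^-1.
Definition DD (F : fieldType) (q : F) L : F := \prod_(t < L) dd q t.

Lemma PL_step (F : fieldType) (q : F) (hq : q != 0) L :
  PL q L.+1 = ('X + ((q ^+ (2 * L + 1))^-1)%:P) * PL q L * ('X + (q ^+ (2 * L + 1))%:P).
Proof.
rewrite /PL.
have -> : (2 * L.+1 = (2 * L).+1.+1)%N by lia.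
rewrite big_ord_recl big_ord_recr /= cc_first // mulrA; congr (_ * _ * _).
  by apply: eq_bigr => i _; rewrite /bump /= cc_shift.
by rewrite /bump /= cc_shift cc_last.
Qed.

Lemma PL_cong (F : fieldType) (q : F) (hq : q != 0) L :
  pp F %| PL q L - DD q L *: 'X^L.
Proof.
elim: L => [|L IH].
  by rewrite /PL /DD !big_ord0 scale1r expr0 subrr dvdp0.
rewrite PL_step // /DD big_ord_recr /= -/(DD q L).
set a := q ^+ (2 * L + 1).
have ha : a != 0 by rewrite expf_neq0.
have -> : ('X + (a^-1)%:P) * PL q L * ('X + a%:P) - (DD q L * dd q L) *: 'X^(L.+1) =
   pp F * PL q L + (dd q L)%:P * 'X * (PL q L - DD q L *: 'X^L).
  have h : (a^-1)%:P * a%:P = 1 :> {poly F} by rewrite -polyCM mulVf // polyC1.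
  rewrite /pp /dd -/a -!mul_polyC !polyCM !polyCD polyC1 exprS.
  set P := PL q L.
  apply: (@eq_trans _ _ ((('X^2 - 'X + 1) * P + (1 + a%:P + (a^-1)%:P) * 'X * (P - (DD q L)%:P * 'X^L))
      + ((a^-1)%:P * a%:P - 1) * P)); first ring.
  by rewrite h subrr mul0r addr0.
apply: dvdp_add; [apply: dvdp_mulr; exact: dvdpp | apply: dvdp_mull; exact: IH].
Qed.



Definition Pf (F : fieldType) (q : F) L : {poly F} := \prod_(t < (2 * L + 1)%N) ('X + (cc q L t)%:P).

Lemma Pf_PL (F : fieldType) (q : F) L : Pf q L = PL q L * ('X + (q ^+ (2 * L + 1))%:P).
Proof. by rewrite /Pf /PL addn1 big_ord_recr /= cc_last addn1. Qed.

Lemma phiA_closed (F : fieldType) (q : F) (hq : q != 0) L :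
  phi ('X^(5 * L + 5) * Pf q L) = - (DD q L * q ^+ (2 * L + 1)).
Proof.
set c := q ^+ (2 * L + 1).
rewrite (@phi_congr _ _ (DD q L *: ('X^(6 * L + 6) + c *: 'X^(6 * L + 5)))).
  rewrite phiZ phiD phiZ !phiX.
  have -> : ((6 * L + 6) %% 6 = 0)%N by lia.
  have -> : ((6 * L + 5) %% 6 = 5)%N by lia.
  by rewrite /=; ring.
have -> : 'X^(5 * L + 5) * Pf q L - DD q L *: ('X^(6 * L + 6) + c *: 'X^(6 * L + 5)) =
   'X^(5 * L + 5) * ('X + c%:P) * (PL q L - DD q L *: 'X^L).
  rewrite Pf_PL -/c -!mul_polyC.
  have -> : ('X^(6 * L + 6) : {poly F}) = 'X^(5 * L + 5) * 'X * 'X^L.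
    by rewrite -exprSr -exprD; congr (_ ^+ _); lia.
  have -> : ('X^(6 * L + 5) : {poly F}) = 'X^(5 * L + 5) * 'X^L.
    by rewrite -exprD; congr (_ ^+ _); lia.
  ring.
by apply: dvdp_mull; exact: PL_cong.
Qed.

Lemma poly_sum (F : fieldType) (P : {poly F}) m : (size P <= m)%N ->
  P = \sum_(i < m) P`_i *: 'X^i.
Proof.
move=> H; rewrite -poly_def; apply/polyP => i; rewrite coef_poly.
case: ltnP => // Hi; rewrite nth_default //; exact: leq_trans H Hi.
Qed.

Lemma Pf_coef (F : fieldType) (q : F) (hq : q != 0) L i :
  (Pf q L)`_i = if (i <= 2 * L + 1)%N then gb (q ^+ 2) (2 * L + 1) (2 * L + 1 - i) * W (cc q L) (2 * L + 1 - i) else 0.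
Proof. by rewrite /Pf (prod_coef (Q := q ^+ 2)) //; exact: cc_rec. Qed.

Lemma phiA_sum (F : fieldType) (q : F) (hq : q != 0) L :
  phi ('X^(5 * L + 5) * Pf q L) =
  \sum_(i < (2 * L + 2)%N) (Pf q L)`_i * psi F ((i + 5 * L + 5) %% 6).
Proof.
rewrite {1}(@poly_sum _ (Pf q L) (2 * L + 2)); last first.
  apply/leq_sizeP => j Hj; rewrite Pf_coef // ifF //; lia.
rewrite mulr_sumr phi_sum; apply: eq_bigr => i _.
by rewrite -scalerAr phiZ -exprD phiX; congr (_ * psi F _); lia.
Qed.

Lemma W_cc (F : fieldType) (q : F) (hq : q != 0) L m :
  W (cc q L) m = q ^ (m%:Z * m%:Z - 2%:Z * L%:Z * m%:Z).
Proof.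
elim: m => [|m IH].
  rewrite /W big_ord0.
  have -> : ((0%N)%:Z * (0%N)%:Z - 2%:Z * L%:Z * (0%N)%:Z) = 0 :> int by lia.
  by rewrite expr0z.
rewrite /W big_ord_recr /= -/(W (cc q L) m) IH /cc -expfzDr //; congr (_ ^ _); lia.
Qed.

Lemma DD_qpoch (F : fieldType) (q : F) (hq : q != 0) L :
  q ^ (L%:Z * L%:Z) * DD q L * qpoch q (q ^+ 2) L = qpoch (q ^+ 3) (q ^+ 6) L.
Proof.
elim: L => [|L IH]; first by rewrite /DD /qpoch !big_ord0 mulr0 expr0z !mulr1.
rewrite /DD /qpoch !big_ord_recr /= -/(DD q L) -/(qpoch q (q ^+ 2) L) -/(qpoch (q ^+ 3) (q ^+ 6) L).
rewrite -IH /dd.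
set a := q ^+ (2 * L + 1).
have ha : a != 0 by rewrite expf_neq0.
have -> : q ^ (L.+1%:Z * L.+1%:Z) = q ^ (L%:Z * L%:Z) * a.
  by rewrite /a exprnP -expfzDr //; congr (_ ^ _); lia.
have -> : q * (q ^+ 2) ^+ L = a by rewrite /a -exprM -exprS; congr (_ ^+ _); lia.
have -> : q ^+ 3 * (q ^+ 6) ^+ L = a ^+ 3 by rewrite /a -!exprM -exprD; congr (_ ^+ _); lia.
by field.
Qed.



Lemma sum_window (R : nmodType) (f : nat -> R) a m N : (a + m <= N)%N ->
  (forall k, (k < a)%N -> f k = 0) -> (forall k, (a + m <= k)%N -> (k < N)%N -> f k = 0) ->
  \sum_(k < N) f k = \sum_(i < m) f (a + i)%N.
Proof.
move=> HN H1 H2.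
rewrite -(big_mkord xpredT f) -(big_mkord xpredT (fun i => f (a + i)%N)).
rewrite (@big_cat_nat _ _ _ a 0 N) /=; [|lia|lia].
rewrite (@big_cat_nat _ _ _ (a + m)%N a N) /=; [|lia|lia].
have Z1 : \sum_(0 <= i < a) f i = 0.
  by rewrite big_nat_cond big1 // => i Hi; apply: H1; move: Hi; lia.
have Z2 : \sum_(a + m <= i < N) f i = 0.
  by rewrite big_nat_cond big1 // => i Hi; apply: H2; move: Hi; lia.
rewrite Z1 Z2.
rewrite add0r addr0 -{1}(add0n a) big_addn.
have -> : (a + m - a = m)%N by lia.
by apply: eq_bigr => i _; rewrite addnC.
Qed.

Lemma sign_psi (F : fieldType) L k :
  (-1) ^+ `|(k%:Z - (2 * L + 2)%N%:Z)|%N * (leg3 (k%:Z - (2 * L + 2)%N%:Z))%:~R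
  = - psi F ((k + 4 * L + 4) %% 6) :> F.
Proof.
set j := (k%:Z - (2 * L + 2)%N%:Z).
rewrite -signr_odd /leg3.
have hr := ltn_pmod (k + 4 * L + 4) (isT : (0 < 6)%N).
have hj : j = k%:Z - (2 * L + 2)%N%:Z by [].
move: hr; set r := ((k + 4 * L + 4) %% 6)%N => hr.
have hr' : r = ((k + 4 * L + 4) %% 6)%N by [].
case: r hr hr' => [|[|[|[|[|[|r]]]]]] // _ hr'.
- have -> : odd `|j| = false by lia.
  have -> : (j %% 3)%Z = 0 by lia.
  by rewrite /= oppr0 mulr0.
- have -> : odd `|j| = true by lia.
  have -> : (j %% 3)%Z = 1 by lia.
  by rewrite /= mulr1 expr1.
- have -> : odd `|j| = false by lia.
  have -> : (j %% 3)%Z = 2 by lia.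
  by rewrite /= expr0 mul1r.
- have -> : odd `|j| = true by lia.
  have -> : (j %% 3)%Z = 0 by lia.
  by rewrite /= mulr0 oppr0.
- have -> : odd `|j| = false by lia.
  have -> : (j %% 3)%Z = 1 by lia.
  by rewrite /= expr0 mul1r opprK.
- have -> : odd `|j| = true by lia.
  have -> : (j %% 3)%Z = 2 by lia.
  by rewrite /= expr1 mulrN1 opprK.
Qed.



Lemma qX_neq0 : qX != 0.
Proof. by rewrite /qX tofrac_eq0 polyX_eq0. Qed.

Lemma qX_pow_neq1 k : (0 < k)%N -> 1 - qX ^+ k != 0.
Proof.
move=> Hk; rewrite /qX -tofracXn -tofrac1 -tofracB tofrac_eq0.
apply/eqP => h; have := congr1 (fun p : {poly int} => p`_k) h.
rewrite coefB coef1 coefXn eqxx coef0.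
have -> : (k == 0%N) = false by lia.
by rewrite /= sub0r => /eqP; rewrite oppr_eq0 oner_eq0.
Qed.

Lemma HQ k : (0 < k)%N -> (qX ^+ 2) ^+ k != 1.
Proof.
move=> Hk; rewrite -exprM eq_sym -subr_eq0; apply: qX_pow_neq1; lia.
Qed.

Lemma qpoch1_neq0 L : qpoch qX (qX ^+ 2) L != 0.
Proof.
rewrite /qpoch; apply/prodf_neq0 => i _.
rewrite -exprM -exprS; apply: qX_pow_neq1; lia.
Qed.

Lemma fin_alg (F : fieldType) (a b c d : F) : d != 0 -> - a * - (b * c) = c * (a * b * d) / d.
Proof. by move=> hd; field. Qed.

Unset Implicit Arguments.

Theorem theorem2p6 (L : nat) :
  \sum_(k < (4 * L + 5)%N)
     (let j : int := (k%:Z - (2 * L + 2)%:Z)%R in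
      (-1) ^+ `|j|%N * (leg3 j)%:~R
        * qbinom (qX ^+ 2) (2 * L + 1)%:Z (L%:Z - j) * qX ^+ (`|j| ^ 2)%N)
  = qX ^+ (1 + 2 * L) * qpoch (qX ^+ 3) (qX ^+ 6) L / qpoch qX (qX ^+ 2) L.
Proof.
have hq := qX_neq0.
pose f := fun k : nat => (let j : int := (k%:Z - (2 * L + 2)%:Z)%R in
      (-1) ^+ `|j|%N * (leg3 j)%:~R
        * qbinom (qX ^+ 2) (2 * L + 1)%:Z (L%:Z - j) * qX ^+ (`|j| ^ 2)%N).
rewrite (@sum_window _ f (L + 1) (2 * L + 2)); first last.
- move=> k Hk Hk'; rewrite /f /= /qbinom ifF ?mulr0 ?mul0r //; lia.
- move=> k Hk; rewrite /f /= /qbinom ifF ?mulr0 ?mul0r //; lia.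
- lia.
have step : forall i : 'I_(2 * L + 2),
  (let j : int := (((L + 1) + i)%N%:Z - (2 * L + 2)%:Z)%R in
      (-1) ^+ `|j|%N * (leg3 j)%:~R
        * qbinom (qX ^+ 2) (2 * L + 1)%:Z (L%:Z - j) * qX ^+ (`|j| ^ 2)%N)
  = - (qX ^ (L%:Z * L%:Z)) * ((Pf qX L)`_i * psi _ ((i + 5 * L + 5) %% 6)).
  move=> [i Hi] /=.
  rewrite sign_psi.
  have -> : ((L + 1 + i + 4 * L + 4) = (i + 5 * L + 5))%N by lia.
  rewrite Pf_coef // ifT; last lia.
  set m := (2 * L + 1 - i)%N.
  have -> : (L%:Z - ((L + 1 + i)%N%:Z - (2 * L + 2)%N%:Z)) = m%:Z by rewrite /m; lia.
  rewrite qbinom_gb; last exact: HQ.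
  rewrite W_cc // [X in _ * X = _]exprnP.
  have -> : ((`|(L + 1 + i)%N%:Z - (2 * L + 2)%N%:Z| ^ 2)%N%:Z)
       = (L%:Z * L%:Z + (m%:Z * m%:Z - 2%:Z * L%:Z * m%:Z)).
    have -> : ((`|(L + 1 + i)%N%:Z - (2 * L + 2)%N%:Z| ^ 2)%N%:Z)
       = ((L + 1 + i)%N%:Z - (2 * L + 2)%N%:Z) * ((L + 1 + i)%N%:Z - (2 * L + 2)%N%:Z) by lia.
    have -> : ((L + 1 + i)%N%:Z - (2 * L + 2)%N%:Z) = L%:Z - m%:Z by rewrite /m; lia.
    ring.
  rewrite expfzDr //; ring.
rewrite (eq_bigr _ (fun i _ => step i)).
rewrite -mulr_sumr -phiA_sum // phiA_closed //.
rewrite -DD_qpoch //.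
have -> : qX ^+ (2 * L + 1) = qX ^+ (1 + 2 * L) by rewrite addnC.
exact: fin_alg (qpoch1_neq0 L).
Qed.
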